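(* Let $T$ be a triangle with maximum angle $\theta_M<\pi$, and let $e_1,e_2$ be the two edges of $T$ adjacent to the maximum angle, with unit tangent vectors $\mathbf t_{e_1},\mathbf t_{e_2}$. Then for every segment $e\subseteq T$ with unit direction vector $\mathbf t_e$, $$\|\mathbf v_h\cdot\mathbf t_e\|_{0,e}\lesssim(\sin\theta_M)^{-1/2}\sum_{i=1,2}\|\mathbf v_h\cdot\mathbf t_{e_i}\|_{0,e_i}\qquad\forall\mathbf v_h\in[\mathcal P_0(T)]^2.$$
   Context: $[\mathcal P_0(T)]^2$ denotes constant vector fields on $T$; $\|\cdot\|_{0,e}$ is the $L^2$ norm on the segment $e$. $A\lesssim B$ means $A\le CB$ with an absolute constant $C$. *)

(* Defs.v *)
From Stdlib Require Import Reals Lra.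
From Coquelicot Require Import Coquelicot.
Open Scope R_scope.

Definition pt : Type := (R * R)%type.
Definition vadd (u v : pt) : pt := (fst u + fst v, snd u + snd v).
Definition vsub (u v : pt) : pt := (fst u - fst v, snd u - snd v).
Definition vscale (c : R) (u : pt) : pt := (c * fst u, c * snd u).
Definition vdot (u v : pt) : R := fst u * fst v + snd u * snd v.
Definition vnorm (u : pt) : R := sqrt (vdot u u).
Definition unitv (u : pt) : pt := vscale (/ vnorm u) u.

Definition angle_at (X Y Z : pt) : R :=
  acos (vdot (vsub Y X) (vsub Z X) / (vnorm (vsub Y X) * vnorm (vsub Z X))).

Definition in_triangle (A B C x : pt) : Prop :=
  exists l1 l2 l3 : R, 0 <= l1 /\ 0 <= l2 /\ 0 <= l3 /\ l1 + l2 + l3 = 1 /\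
    x = vadd (vscale l1 A) (vadd (vscale l2 B) (vscale l3 C)).

(* L^2 norm on the segment [a,b] (arc-length measure) of f : R^2 -> R *)
Definition seg_L2 (f : pt -> R) (a b : pt) : R :=
  sqrt (RInt (fun s => (f (vadd a (vscale s (vsub b a))))^2 * vnorm (vsub b a)) 0 1).

(* Main.v *)
Require Import Defs.
From Stdlib Require Import Reals Lra Psatz.
From Coquelicot Require Import Coquelicot.
Open Scope R_scope.
Lemma nsq (u1 u2 : R) : sqrt (u1*u1+u2*u2) * sqrt (u1*u1+u2*u2) = u1*u1+u2*u2.
Proof. apply sqrt_sqrt; nra. Qed.

Lemma npos (u1 u2 : R) : (u1, u2) <> (0,0) -> 0 < sqrt (u1*u1+u2*u2).
Proof.
  intro H. apply sqrt_lt_R0.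
  destruct (Req_dec u1 0) as [->|H1]; destruct (Req_dec u2 0) as [->|H2]; try congruence; nra.
Qed.

Lemma c2 (u1 u2 w1 w2 : R) : (u1,u2) <> (0,0) -> (w1,w2) <> (0,0) ->
  let c := (u1*w1+u2*w2) / (sqrt (u1*u1+u2*u2) * sqrt (w1*w1+w2*w2)) in
  c * c <= 1.
Proof.
  intros Hu Hw c.
  pose proof (npos _ _ Hu) as Hnu. pose proof (npos _ _ Hw) as Hnw.
  pose proof (nsq u1 u2) as Hnu2. pose proof (nsq w1 w2) as Hnw2.
  set (nu := sqrt (u1*u1+u2*u2)) in *. set (nw := sqrt (w1*w1+w2*w2)) in *.
  assert (Hc2 : c*c*((nu*nu)*(nw*nw)) = (u1*w1+u2*w2)*(u1*w1+u2*w2)).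
  { unfold c. field. lra. }
  assert (0 < (nu*nu)*(nw*nw)) by (apply Rmult_lt_0_compat; nra).
  apply Rmult_le_reg_r with ((nu*nu)*(nw*nw)). lra.
  rewrite Hc2, Rmult_1_l, Hnu2, Hnw2.
  pose proof (Rle_0_sqr (u1*w2-u2*w1)). unfold Rsqr in *. nra.
Qed.

Lemma ne0 (p1 p2 q1 q2 : R) : (p1,p2) <> (q1,q2) -> (q1-p1, q2-p2) <> (0,0).
Proof.
  intros H E. apply H. injection E; intros. f_equal; lra.
Qed.

Lemma acos_eq1 (x : R) : -1 <= x <= 1 -> acos x = 0 -> x = 1.
Proof. intros H E. rewrite <- (cos_acos x H), E. apply cos_0. Qed.

Lemma angle_facts (p1 p2 q1 q2 r1 r2 : R) :
  let P := (p1,p2) in let Q := (q1,q2) in let R0 := (r1,r2) in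
    P <> Q -> P <> R0 -> Q <> R0 ->
    angle_at Q P R0 <= angle_at P Q R0 ->
    angle_at R0 P Q <= angle_at P Q R0 ->
    angle_at P Q R0 < PI ->
  let c := ((q1-p1)*(r1-p1)+(q2-p2)*(r2-p2)) /
     (sqrt ((q1-p1)*(q1-p1)+(q2-p2)*(q2-p2)) * sqrt ((r1-p1)*(r1-p1)+(r2-p2)*(r2-p2))) in
  c * c < 1 /\ sin (angle_at P Q R0) = sqrt (1 - c*c).
Proof.
  intros P Q R0 HPQ HPR HQR H1 H2 H3 c.
  assert (HPQ' : (q1,q2) <> (p1,p2)) by (intro E; apply HPQ; symmetry; exact E).
  assert (HPR' : (r1,r2) <> (p1,p2)) by (intro E; apply HPR; symmetry; exact E).
  assert (HQR' : (r1,r2) <> (q1,q2)) by (intro E; apply HQR; symmetry; exact E).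
  assert (HC : c * c <= 1) by (apply c2; apply ne0; assumption).
  assert (HA : angle_at P Q R0 = acos c) by reflexivity.
  split.
  2: { rewrite HA, sin_acos by nra. unfold Rsqr. reflexivity. }
  destruct (Rle_lt_or_eq_dec _ _ HC) as [Hlt|Heq]; [exact Hlt|exfalso].
  assert (Hc : c = 1 \/ c = -1) by nra.
  destruct Hc as [Hc|Hc].
  2:{ rewrite HA, Hc in H3. replace (-1) with (-(1)) in H3 by ring. rewrite acos_opp, acos_1 in H3. lra. }
  rewrite HA, Hc, acos_1 in H1, H2.
  set (cQ := vdot (vsub P Q) (vsub R0 Q) / (vnorm (vsub P Q) * vnorm (vsub R0 Q))).
  set (cR := vdot (vsub P R0) (vsub Q R0) / (vnorm (vsub P R0) * vnorm (vsub Q R0))).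
  assert (EQ : acos cQ = 0) by (pose proof (acos_bound cQ); unfold angle_at in H1; fold cQ in H1; lra).
  assert (ER : acos cR = 0) by (pose proof (acos_bound cR); unfold angle_at in H2; fold cR in H2; lra).
  assert (cQ * cQ <= 1).
  { unfold cQ, vdot, vnorm, vsub, P, Q, R0; simpl. apply c2; apply ne0; assumption. }
  assert (cR * cR <= 1).
  { unfold cR, vdot, vnorm, vsub, P, Q, R0; simpl. apply c2; apply ne0; assumption. }
  apply acos_eq1 in EQ; [|nra]. apply acos_eq1 in ER; [|nra].
  unfold cQ, cR, c, vnorm, vdot, vsub, P, Q, R0 in *; simpl in *.
  set (u1 := q1 - p1) in *. set (u2 := q2 - p2) in *.
  set (w1 := r1 - p1) in *. set (w2 := r2 - p2) in *.
  assert (Hu : (u1,u2) <> (0,0)) by (apply ne0; assumption).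
  assert (Hw : (w1,w2) <> (0,0)) by (apply ne0; assumption).
  assert (Hd : (w1-u1, w2-u2) <> (0,0)).
  { intro E. injection E; intros. apply HQR. unfold u1,u2,w1,w2 in *. f_equal; lra. }
  pose proof (npos _ _ Hu) as Hnu. pose proof (npos _ _ Hw) as Hnw.
  pose proof (npos _ _ Hd) as Hnd.
  pose proof (nsq u1 u2) as Hnu2. pose proof (nsq w1 w2) as Hnw2.
  pose proof (nsq (w1-u1) (w2-u2)) as Hnd2.
  replace ((p1 - q1) * (p1 - q1) + (p2 - q2) * (p2 - q2)) with (u1*u1+u2*u2) in EQ by (unfold u1,u2; ring).
  replace ((r1 - q1) * (r1 - q1) + (r2 - q2) * (r2 - q2)) with ((w1-u1)*(w1-u1)+(w2-u2)*(w2-u2)) in EQ by (unfold u1,u2,w1,w2; ring).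
  replace ((q1 - r1) * (q1 - r1) + (q2 - r2) * (q2 - r2)) with ((w1-u1)*(w1-u1)+(w2-u2)*(w2-u2)) in ER by (unfold u1,u2,w1,w2; ring).
  replace ((p1 - r1) * (p1 - r1) + (p2 - r2) * (p2 - r2)) with (w1*w1+w2*w2) in ER by (unfold w1,w2; ring).
  set (A := sqrt (u1*u1+u2*u2)) in *. set (B := sqrt (w1*w1+w2*w2)) in *.
  set (D := sqrt ((w1-u1)*(w1-u1)+(w2-u2)*(w2-u2))) in *.
  assert (E1 : u1*w1+u2*w2 = A*B).
  { apply (f_equal (fun t => t * (A*B))) in Hc. field_simplify in Hc; [lra|nra]. }
  assert (E2 : (p1 - q1) * (r1 - q1) + (p2 - q2) * (r2 - q2) = A*D).
  { apply (f_equal (fun t => t * (A*D))) in EQ. field_simplify in EQ; [lra|nra]. }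
  assert (E3 : (p1 - r1) * (q1 - r1) + (p2 - r2) * (q2 - r2) = B*D).
  { apply (f_equal (fun t => t * (B*D))) in ER. field_simplify in ER; [lra|nra]. }
  replace ((p1 - q1) * (r1 - q1) + (p2 - q2) * (r2 - q2)) with (u1*u1+u2*u2 - (u1*w1+u2*w2)) in E2 by (unfold u1,u2,w1,w2; ring).
  replace ((p1 - r1) * (q1 - r1) + (p2 - r2) * (q2 - r2)) with (w1*w1+w2*w2 - (u1*w1+u2*w2)) in E3 by (unfold u1,u2,w1,w2; ring).
  rewrite <- Hnu2, E1 in E2. rewrite <- Hnw2, E1 in E3.
  assert (D = A - B) by nra.
  assert (D = B - A) by nra.
  lra.
Qed.
Lemma seg_const (k : R) (a b : pt) :
  seg_L2 (fun _ => k) a b = Rabs k * sqrt (vnorm (vsub b a)).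
Proof.
  unfold seg_L2. rewrite RInt_const. unfold scal; simpl; unfold mult; simpl.
  rewrite Rminus_0_r, Rmult_1_l.
  rewrite sqrt_mult_alt by nra.
  rewrite <- sqrt_Rsqr_abs. unfold Rsqr. f_equal. f_equal. ring.
Qed.
Lemma lb (u1 u2 w1 w2 x y : R) :
  (u1,u2) <> (0,0) -> (w1,w2) <> (0,0) ->
  let nu := sqrt (u1*u1+u2*u2) in let nw := sqrt (w1*w1+w2*w2) in
  let c := (u1*w1+u2*w2) / (nu*nw) in
  c*c <= 1 ->
  sqrt (1 - c*c) * Rabs x * nu <=
  sqrt ((x*u1+y*w1)*(x*u1+y*w1)+(x*u2+y*w2)*(x*u2+y*w2)).
Proof.
  intros Hu Hw nu nw c Hc.
  pose proof (npos _ _ Hu) as Hnu. pose proof (npos _ _ Hw) as Hnw.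
  fold nu in Hnu. fold nw in Hnw.
  pose proof (nsq u1 u2) as Hnu2. pose proof (nsq w1 w2) as Hnw2. fold nu in Hnu2; fold nw in Hnw2.
  apply Rsqr_incr_0_var; [|apply sqrt_pos].
  rewrite !Rsqr_mult, !Rsqr_sqrt by (first [lra | nra]). rewrite <- Rsqr_abs. unfold Rsqr.
  assert (Hc2 : c*c*(nu*nu)*(nw*nw) = (u1*w1+u2*w2)*(u1*w1+u2*w2)).
  { unfold c. field. lra. }
  apply Rmult_le_reg_r with (nw*nw). nra.
  assert (E : (1 - c*c)*(x*x)*(nu*nu)*(nw*nw) = x*x*((u1*w2-u2*w1)*(u1*w2-u2*w1))).
  { transitivity ((x*x)*((nu*nu)*(nw*nw) - c*c*(nu*nu)*(nw*nw))). ring.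
    rewrite Hc2, Hnu2, Hnw2. ring. }
  rewrite E, Hnw2.
  pose proof (Rle_0_sqr ((x*u1+y*w1)*w1+(x*u2+y*w2)*w2)). unfold Rsqr in *.
  assert (I : ((x*u1+y*w1)*(x*u1+y*w1)+(x*u2+y*w2)*(x*u2+y*w2))*(w1*w1+w2*w2)
    = x*x*((u1*w2-u2*w1)*(u1*w2-u2*w1)) + ((x*u1+y*w1)*w1+(x*u2+y*w2)*w2)*((x*u1+y*w1)*w1+(x*u2+y*w2)*w2)) by ring.
  rewrite sqrt_sqrt by (apply Rplus_le_le_0_compat; apply Rle_0_sqr). lra.
Qed.
Lemma term (L s nu x p : R) : 0 < L -> 0 < s -> 0 < nu -> Rabs x <= 1 ->
  s * Rabs x * nu <= L ->
  Rabs x * Rabs p / L * sqrt L <= / sqrt s * (Rabs p / nu * sqrt nu).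
Proof.
  intros HL Hs Hnu Hx H.
  assert (A : Rabs x * sqrt s * sqrt nu <= sqrt L).
  { rewrite <- (sqrt_Rsqr_abs x). rewrite <- (sqrt_mult_alt (x²) s) by apply Rle_0_sqr.
    rewrite <- (sqrt_mult_alt (x² * s) nu) by (apply Rmult_le_pos; [apply Rle_0_sqr|lra]).
    apply sqrt_le_1_alt. rewrite Rsqr_abs. unfold Rsqr.
    pose proof (Rabs_pos x). nra. }
  pose proof (sqrt_lt_R0 _ HL) as Ha. pose proof (sqrt_lt_R0 _ Hs) as Hb.
  pose proof (sqrt_lt_R0 _ Hnu) as Hc.
  pose proof (sqrt_sqrt L (Rlt_le _ _ HL)) as EL.
  pose proof (sqrt_sqrt nu (Rlt_le _ _ Hnu)) as En.
  set (a := sqrt L) in *. set (b := sqrt s) in *. set (c := sqrt nu) in *.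
  rewrite <- EL, <- En.
  replace (Rabs x * Rabs p / (a * a) * a) with ((Rabs x * b * c) * Rabs p * / (a*b*c)) by (field; repeat split; lra).
  replace (/ b * (Rabs p / (c * c) * c)) with (a * Rabs p * / (a*b*c)) by (field; repeat split; lra).
  apply Rmult_le_compat_r. left; apply Rinv_0_lt_compat; repeat apply Rmult_lt_0_compat; assumption.
  apply Rmult_le_compat_r. apply Rabs_pos. exact A.
Qed.

Lemma key (L s nu nw x y p q : R) : 0 < L -> 0 < s -> 0 < nu -> 0 < nw ->
  Rabs x <= 1 -> Rabs y <= 1 -> s * Rabs x * nu <= L -> s * Rabs y * nw <= L ->
  Rabs (x*p + y*q) / L * sqrt L <= 1 * / sqrt s * (Rabs p / nu * sqrt nu + Rabs q / nw * sqrt nw).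
Proof.
  intros.
  pose proof (term L s nu x p H H0 H1 H3 H5) as T1.
  pose proof (term L s nw y q H H0 H2 H4 H6) as T2.
  rewrite Rmult_1_l, Rmult_plus_distr_l.
  eapply Rle_trans. 2: apply Rplus_le_compat; [exact T1 | exact T2].
  replace (Rabs x * Rabs p / L * sqrt L + Rabs y * Rabs q / L * sqrt L)
    with ((Rabs x * Rabs p + Rabs y * Rabs q) * / L * sqrt L) by (field; lra).
  unfold Rdiv.
  apply Rmult_le_compat_r. apply sqrt_pos.
  apply Rmult_le_compat_r. left; apply Rinv_0_lt_compat; lra.
  rewrite <- !Rabs_mult. apply Rabs_triang.
Qed.

Lemma dot_unit (v d : pt) : 0 < vnorm d ->
  Rabs (vdot v (unitv d)) = Rabs (vdot v d) / vnorm d.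
Proof.
  intro H. destruct v as [v1 v2], d as [d1 d2].
  unfold unitv, vdot, vscale; simpl.
  replace (v1 * (/ vnorm (d1, d2) * d1) + v2 * (/ vnorm (d1, d2) * d2))
    with ((v1*d1+v2*d2) * / vnorm (d1,d2)) by ring.
  rewrite Rabs_mult, Rabs_inv, (Rabs_pos_eq (vnorm _)) by lra. reflexivity.
Qed.

Theorem lemmaC3 :
  exists C : R, 0 < C /\
  forall P Q R0 : pt,
    P <> Q -> P <> R0 -> Q <> R0 ->
    angle_at Q P R0 <= angle_at P Q R0 ->
    angle_at R0 P Q <= angle_at P Q R0 ->
    angle_at P Q R0 < PI ->
    forall a b : pt,
      in_triangle P Q R0 a -> in_triangle P Q R0 b -> a <> b ->
      forall v : pt,
        seg_L2 (fun _ => vdot v (unitv (vsub b a))) a b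
        <= C * / sqrt (sin (angle_at P Q R0)) *
           (seg_L2 (fun _ => vdot v (unitv (vsub Q P))) P Q
            + seg_L2 (fun _ => vdot v (unitv (vsub R0 P))) P R0).
Proof.
  exists 1. split; [lra|].
  intros [p1 p2] [q1 q2] [r1 r2] HPQ HPR HQR H1 H2 H3 a b Ha Hb Hab v.
  destruct (angle_facts p1 p2 q1 q2 r1 r2 HPQ HPR HQR H1 H2 H3) as [Hc Hsin].
  rewrite Hsin. rewrite !seg_const.
  assert (Hd : vsub b a <> (0,0)).
  { intro E; apply Hab; destruct a as [a1 a2], b as [b1 b2]; unfold vsub in E; simpl in E.
    injection E; intros; f_equal; lra. }
  destruct Ha as (l1 & l2 & l3 & Hl1 & Hl2 & Hl3 & Hls & ->).
  destruct Hb as (m1 & m2 & m3 & Hm1 & Hm2 & Hm3 & Hms & ->).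
  assert (El : l1 = 1 - l2 - l3) by lra. assert (Em : m1 = 1 - m2 - m3) by lra.
  subst l1 m1.
  set (x := m2 - l2). set (y := m3 - l3).
  set (u1 := q1 - p1) in *. set (u2 := q2 - p2) in *. set (w1 := r1 - p1) in *. set (w2 := r2 - p2) in *.
  set (c := (u1*w1+u2*w2) / (sqrt (u1*u1+u2*u2) * sqrt (w1*w1+w2*w2))) in *.
  assert (HD : vsub (vadd (vscale (1 - m2 - m3) (p1, p2)) (vadd (vscale m2 (q1, q2)) (vscale m3 (r1, r2))))
                    (vadd (vscale (1 - l2 - l3) (p1, p2)) (vadd (vscale l2 (q1, q2)) (vscale l3 (r1, r2))))
             = (x*u1+y*w1, x*u2+y*w2)).
  { unfold vsub, vadd, vscale; simpl. unfold x, y, u1, u2, w1, w2. f_equal; ring. }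
  rewrite HD in Hd |- *.
  assert (HL : 0 < vnorm (x*u1+y*w1, x*u2+y*w2)) by (apply npos; exact Hd).
  assert (Hu : (u1,u2) <> (0,0)) by (apply ne0; exact HPQ).
  assert (Hw : (w1,w2) <> (0,0)) by (apply ne0; exact HPR).
  assert (HVu : vsub (q1,q2) (p1,p2) = (u1,u2)) by reflexivity.
  assert (HVw : vsub (r1,r2) (p1,p2) = (w1,w2)) by reflexivity.
  rewrite HVu, HVw.
  pose proof (npos _ _ Hu) as Hnu. pose proof (npos _ _ Hw) as Hnw.
  rewrite !dot_unit by assumption.
  assert (Edot : vdot v (x*u1+y*w1, x*u2+y*w2) = x * vdot v (u1,u2) + y * vdot v (w1,w2)).
  { destruct v; unfold vdot; simpl; ring. }
  rewrite Edot.
  assert (Hs : 0 < sqrt (1 - c*c)) by (apply sqrt_lt_R0; lra).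
  assert (Hx : Rabs x <= 1) by (unfold x; apply Rabs_le; lra).
  assert (Hy : Rabs y <= 1) by (unfold y; apply Rabs_le; lra).
  pose proof (lb u1 u2 w1 w2 x y Hu Hw (Rlt_le _ _ Hc)) as Lx.
  pose proof (lb w1 w2 u1 u2 y x Hw Hu) as Ly. simpl in Ly.
  assert (Ec : (w1 * u1 + w2 * u2) / (sqrt (w1 * w1 + w2 * w2) * sqrt (u1 * u1 + u2 * u2)) = c).
  { unfold c. rewrite (Rmult_comm (sqrt (w1 * w1 + w2 * w2))). f_equal. ring. }
  rewrite Ec in Ly. specialize (Ly (Rlt_le _ _ Hc)).
  replace ((y * w1 + x * u1) * (y * w1 + x * u1) + (y * w2 + x * u2) * (y * w2 + x * u2))
    with ((x * u1 + y * w1) * (x * u1 + y * w1) + (x * u2 + y * w2) * (x * u2 + y * w2)) in Ly by ring.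
  apply key; assumption.
Qed.
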